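(* Let $A,B:\mathbb{R}^n\rightrightarrows\mathbb{R}^n$ be maximally monotone with $B$ $\beta$-cocoercive for some $\beta>0$, and suppose the solution set $X^\star=\{x:0\in Ax+Bx\}$ is nonempty. Suppose the problem $0\in Ax+Bx$ satisfies restricted strong monotonicity with modulus $\mu_f>0$. Let $\lambda\in(0,2)$, $0<\gamma\le\beta$, assume the DR operator $T$ has a fixed point, and let $w^1\in\mathbb{R}^n$. Then $T$ satisfies the error bound condition on $W=\{w:\operatorname{dist}_{W^\star}(w)\le\operatorname{dist}_{W^\star}(w^1)\}$ with constant $$\mu=\frac{\gamma+\gamma\min(\mu_f\beta,1)+\beta}{\lambda\gamma\min(\mu_f\beta,1)}.$$
   Context: For a maximally monotone operator $M$, $J_M=(I+M)^{-1}$ and $R_M=2J_M-I$. The DR operator is $T=(1-\tfrac{\lambda}{2})I+\tfrac{\lambda}{2}R_{\gamma A}R_{\gamma B}$ and $W^\star$ denotes its set of fixed points; $\operatorname{dist}_{W^\star}$ is the Euclidean distance to $W^\star$. $B$ is $\beta$-cocoercive if $\langle u-v,x-y\rangle\ge\beta\|u-v\|^2$ for all $(x,u),(y,v)$ in the graph of $B$. Restricted strong monotonicity with modulus $\mu_f>0$: for all $x\in\mathbb{R}^n$, all $u\in Ax$, $v\in Bx$, $\langle u+v,x-x^\star\rangle\ge\mu_f\|x-x^\star\|^2$ where $x^\star=\Pi_{X^\star}(x)$ is the Euclidean projection of $x$ onto $X^\star$. Error bound condition: $T$ satisfies it on $W$ with constant $\mu\ge0$ if $\operatorname{dist}_{W^\star}(w)\le\mu\|(I-T)w\|$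 for all $w\in W$. *)

(* Defs.v *)
(* R^n is modelled as row vectors 'rV[R]_n
   over an arbitrary R : realType, with the Euclidean inner product. *)
From HB Require Import structures.
From mathcomp Require Import all_boot all_order all_algebra.
From mathcomp Require Import classical_sets boolp reals.
Set Implicit Arguments. Unset Strict Implicit. Unset Printing Implicit Defensive.
Import Order.TTheory GRing.Theory Num.Theory.
Local Open Scope ring_scope.
Local Open Scope classical_set_scope.

Section MonotoneOps.
Variables (R : realType) (n : nat).
Notation V := 'rV[R]_n.

Definition dot (u v : V) : R := \sum_(i < n) u ord0 i * v ord0 i.
Definition enorm (u : V) : R := Num.sqrt (dot u u).

Definition setop := V -> set V.

Definition monotone (M : setop) : Prop :=
  forall x y u v, M x u -> M y v -> 0 <= dot (u - v) (x - y).

Definition maximally_monotone (M : setop) : Prop :=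
  monotone M /\
  forall M' : setop, monotone M' -> (forall x u, M x u -> M' x u) ->
    forall x u, M' x u -> M x u.

Definition cocoercive (beta : R) (B : setop) : Prop :=
  forall x y u v, B x u -> B y v ->
    beta * enorm (u - v) ^+ 2 <= dot (u - v) (x - y).

Definition scale_op (gamma : R) (M : setop) : setop :=
  fun x => [set gamma *: u | u in M x].

(* resolvent J_M = (I + M)^{-1}: J_M x is a point p with x ∈ p + M p
   (unique when M is maximally monotone, by Minty's theorem) *)
Definition resolvent (M : setop) (x : V) : V :=
  xget 0 [set p | M p (x - p)].

Definition reflected (M : setop) (x : V) : V := 2%:R *: resolvent M x - x.

Definition DR_op (A B : setop) (gamma lambda : R) (w : V) : V :=
  (1 - lambda / 2%:R) *: w +
  (lambda / 2%:R) *: reflected (scale_op gamma A) (reflected (scale_op gamma B) w).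

Definition fixed_points (T : V -> V) : set V := [set w | T w = w].

Definition solution_set (A B : setop) : set V :=
  [set x | exists u v, A x u /\ B x v /\ u + v = 0].

Definition dist (S : set V) (w : V) : R := inf [set enorm (w - z) | z in S].

Definition is_proj (S : set V) (x p : V) : Prop :=
  S p /\ forall q, S q -> enorm (x - p) <= enorm (x - q).

Definition restricted_strongly_monotone (A B : setop) (mu_f : R) : Prop :=
  forall x xs u v, is_proj (solution_set A B) x xs -> A x u -> B x v ->
    mu_f * enorm (x - xs) ^+ 2 <= dot (u + v) (x - xs).

Definition error_bound (T : V -> V) (W : set V) (mu : R) : Prop :=
  forall w, W w -> dist (fixed_points T) w <= mu * enorm (w - T w).

End MonotoneOps.

(* Main.v *)
From HB Require Import structures.
From mathcomp Require Import all_boot all_order all_algebra.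
From mathcomp Require Import classical_sets boolp reals topology normedtype derive finmap.
From mathcomp Require Import ring lra.
Require Import Defs.
Set Implicit Arguments. Unset Strict Implicit. Unset Printing Implicit Defensive.
Import Order.TTheory GRing.Theory Num.Theory.
Import numFieldNormedType.Exports.
Local Open Scope ring_scope.
Local Open Scope classical_set_scope.

Section Euclid.
Variables (R : realType) (n : nat).
Local Notation V := 'rV[R]_n.
Implicit Types u v w : V.

Lemma dotC u v : dot u v = dot v u.
Proof. by rewrite /dot; apply: eq_bigr => i _; rewrite mulrC. Qed.

Lemma dotDl u v w : dot (u + v) w = dot u w + dot v w.
Proof. by rewrite /dot -big_split /=; apply: eq_bigr => i _; rewrite !mxE mulrDl. Qed.

Lemma dotDr u v w : dot w (u + v) = dot w u + dot w v.
Proof. by rewrite dotC dotDl !(dotC w). Qed.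

Lemma dotZl (a : R) u v : dot (a *: u) v = a * dot u v.
Proof. by rewrite /dot mulr_sumr; apply: eq_bigr => i _; rewrite !mxE mulrA. Qed.

Lemma dotZr (a : R) u v : dot v (a *: u) = a * dot v u.
Proof. by rewrite dotC dotZl dotC. Qed.

Lemma dotNl u v : dot (- u) v = - dot u v.
Proof. by rewrite -scaleN1r dotZl mulN1r. Qed.

Lemma dotNr u v : dot v (- u) = - dot v u.
Proof. by rewrite dotC dotNl dotC. Qed.

Lemma dotBl u v w : dot (u - v) w = dot u w - dot v w.
Proof. by rewrite dotDl dotNl. Qed.

Lemma dotBr u v w : dot w (u - v) = dot w u - dot w v.
Proof. by rewrite dotDr dotNr. Qed.

Lemma dot0l u : dot 0 u = 0.
Proof. by rewrite /dot big1 // => i _; rewrite mxE mul0r. Qed.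

Lemma dot0r u : dot u 0 = 0.
Proof. by rewrite dotC dot0l. Qed.

Lemma dot_ge0 u : 0 <= dot u u.
Proof. by rewrite /dot sumr_ge0 // => i _; rewrite -expr2 sqr_ge0. Qed.

Lemma dot_eq0 u : dot u u = 0 -> u = 0.
Proof.
move=> /eqP; rewrite /dot psumr_eq0; last by move=> i _; rewrite -expr2 sqr_ge0.
move=> /allP H; apply/rowP => i; rewrite mxE.
have := H i (mem_index_enum i); rewrite /= -expr2 sqrf_eq0 => /eqP //.
Qed.

Lemma enorm_ge0 u : 0 <= enorm u.
Proof. exact: sqrtr_ge0. Qed.

Lemma enorm_sq u : enorm u ^+ 2 = dot u u.
Proof. by rewrite /enorm sqr_sqrtr // dot_ge0. Qed.

Lemma enorm0 : enorm (0 : V) = 0.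
Proof. by rewrite /enorm dot0l sqrtr0. Qed.

Lemma enorm_eq0 u : enorm u = 0 -> u = 0.
Proof. by move=> h; apply: dot_eq0; rewrite -enorm_sq h expr0n. Qed.

Lemma CS u v : dot u v <= enorm u * enorm v.
Proof.
have [a0|a0] := eqVneq (enorm u) 0.
  by rewrite (enorm_eq0 a0) dot0l enorm0 mul0r.
have [b0|b0] := eqVneq (enorm v) 0.
  by rewrite (enorm_eq0 b0) dot0r enorm0 mulr0.
have ha : 0 < enorm u by rewrite lt_neqAle eq_sym a0 enorm_ge0.
have hb : 0 < enorm v by rewrite lt_neqAle eq_sym b0 enorm_ge0.
have := dot_ge0 (enorm v *: u - enorm u *: v).
rewrite !dotBl !dotBr !dotZl !dotZr -!enorm_sq (dotC v u).
set a := enorm u; set b := enorm v; set d := dot u v => h.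
have hab : 0 < a * b by rewrite mulr_gt0.
suff : (a * b) * d <= (a * b) * (a * b) by rewrite ler_pM2l.
nra.
Qed.

Lemma CSabs u v : `|dot u v| <= enorm u * enorm v.
Proof.
rewrite ler_norml CS andbT -(opprK (dot u v)) lerN2 -dotNl.
by apply: le_trans (CS _ _) _; rewrite /enorm dotNl dotNr opprK.
Qed.

Lemma le_enorm u (c : R) : 0 <= c -> dot u u <= c ^+ 2 -> enorm u <= c.
Proof.
move=> c0 h; rewrite /enorm -[c in _ <= c]ger0_norm // -sqrtr_sqr.
by rewrite ler_sqrt // sqr_ge0.
Qed.

Lemma enorm_triangle u v : enorm (u + v) <= enorm u + enorm v.
Proof.
apply: le_enorm; first by rewrite addr_ge0 // enorm_ge0.
rewrite dotDl !dotDr -!enorm_sq (dotC v u).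
have := CS u v; nra.
Qed.

Lemma enormN u : enorm (- u) = enorm u.
Proof. by rewrite /enorm dotNl dotNr opprK. Qed.

Lemma enormZ (a : R) u : enorm (a *: u) = `|a| * enorm u.
Proof.
rewrite /enorm dotZl dotZr mulrA -expr2 sqrtrM ?sqr_ge0 //.
by rewrite sqrtr_sqr.
Qed.

End Euclid.

Section Topo.
Variables (R : realType).

Lemma sum_continuousW (W : normedModType R) (T : topologicalType) (I : Type) (s : seq I)
   (F : I -> T -> W) : (forall i, continuous (F i)) ->
   continuous (fun x => \sum_(i <- s) F i x).
Proof.
move=> cF; elim: s => [|a s IH].
  have -> : (fun x => \sum_(i <- [::]) F i x) = (fun=> 0) by apply: funext => x; rewrite big_nil.
  exact: cst_continuous.
have -> : (fun x => \sum_(i <- a :: s) F i x) = (fun x => F a x + \sum_(i <- s) F i x).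
  by apply: funext => x; rewrite big_cons.
by move=> x; exact: (continuousD (cF a x) (IH x)).
Qed.

Lemma sum_continuous (T : topologicalType) (I : Type) (s : seq I)
   (F : I -> T -> R) : (forall i, continuous (F i)) ->
   continuous (fun x => \sum_(i <- s) F i x).
Proof. exact: (@sum_continuousW R^o). Qed.

Variable n : nat.
Local Notation V := 'rV[R]_n.

Lemma dot_continuous (T : topologicalType) (f g : T -> V) :
  continuous f -> continuous g -> continuous (fun x => dot (f x) (g x)).
Proof.
move=> cf cg; rewrite /dot; apply: sum_continuous => i x.
have c1 : continuous (fun x => f x ord0 i).
  by move=> y; exact: (continuous_comp (cf y) (@coord_continuous R 1 n ord0 i (f y))).
have c2 : continuous (fun x => g x ord0 i).
  by move=> y; exact: (continuous_comp (cg y) (@coord_continuous R 1 n ord0 i (g y))).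
exact: (continuousM (c1 x) (c2 x)).
Qed.

Lemma closed_ge0 (f : V -> R) : continuous f -> closed [set x | 0 <= f x].
Proof.
move=> cf; have -> : [set x | 0 <= f x] = f @^-1` [set r | 0 <= r] by [].
by apply: preimage_closed; [move=> x _; exact: cf | exact: closed_ge].
Qed.

Lemma coord_le_enorm (x : V) i : `|x ord0 i| <= enorm x.
Proof.
rewrite -sqrtr_sqr /enorm ler_sqrt ?dot_ge0 //.
rewrite /dot (bigD1 i) //= -expr2 lerDl.
by apply: sumr_ge0 => j _; rewrite -expr2 sqr_ge0.
Qed.

Lemma mxnorm_le_enorm (x : V) : `|x| <= enorm x.
Proof.
rewrite [X in X <= _]/Num.norm /= mx_normrE; apply: bigmax_le; first exact: enorm_ge0.
move=> [i j] _ /=; rewrite (ord1 i); exact: coord_le_enorm.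
Qed.

Lemma bounded_enorm (A : set V) (c : R) :
  (forall x, A x -> enorm x <= c) -> bounded_set A.
Proof.
move=> h; exists c; split; first by rewrite num_real.
move=> M hM x Ax /=; apply: le_trans (mxnorm_le_enorm x) _.
by apply: le_trans (h x Ax) _; apply: ltW.
Qed.

Lemma id_cont : continuous (fun x : V => x).
Proof. by move=> x. Qed.

Lemma cst_cont (T : topologicalType) (a : V) : continuous (fun _ : T => a).
Proof. exact: cst_continuous. Qed.

Lemma affine_cont (T : topologicalType) (f : T -> V) (c : R) (a : V) :
  continuous f -> continuous (fun x => a + c *: f x).
Proof.
move=> cf x.
have h1 : {for x, continuous (fun _ : T => a)} by exact: cst_continuous.
have h2 : {for x, continuous (fun y => c *: f y)} by exact: (@continuousZl_tmp _ _ _ f c x (cf x)).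
have := continuousD h1 h2.
by [].
Qed.

End Topo.

Lemma scal (R : realType) (D N : R) : 0 <= N ->
  (forall t, 0 < t -> t <= 1 -> t * D - t ^+ 2 * N / 4%:R <= 0) -> D <= 0.
Proof.
move=> N0 H; rewrite leNgt; apply/negP => D0.
have hp : 0 < D + N + 1 by lra.
set t := D / (D + N + 1).
have t0 : 0 < t by rewrite /t divr_gt0.
have t1 : t <= 1 by rewrite /t ler_pdivrMr // mul1r; lra.
have ht : t * (D + N + 1) = D by rewrite /t mulfVK // gt_eqF.
have := H t t0 t1.
have tN : 0 <= t * N by rewrite mulr_ge0 // ltW.
have tD : 0 < t * D by rewrite mulr_gt0.
have -> : t * D - t ^+ 2 * N / 4%:R = t * (D - t * N / 4%:R) by rewrite expr2; field.
rewrite pmulr_rle0 // => h.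
have e : t * D + t * N + t = D by rewrite -[RHS]ht; ring.
lra.
Qed.

Section Finite.
Variables (R : realType) (n : nat).
Local Notation V := 'rV[R]_n.

Lemma dot_suml (I : Type) (s : seq I) (F : I -> V) v :
  dot (\sum_(i <- s) F i) v = \sum_(i <- s) dot (F i) v.
Proof. by rewrite (big_morph (fun u => dot u v) (fun a b => dotDl a b v) (dot0l v)). Qed.

Lemma dot_sumr (I : Type) (s : seq I) (F : I -> V) v :
  dot v (\sum_(i <- s) F i) = \sum_(i <- s) dot v (F i).
Proof. by rewrite dotC dot_suml; apply: eq_bigr => i _; rewrite dotC. Qed.

Variables (k : nat) (Y Av : 'I_k -> V).
Local Notation L := 'rV[R]_k.

Definition Sv (w : 'I_k -> V) (l : L) : V := \sum_i l ord0 i *: w i.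
Definition Sp (p : 'I_k -> R) (l : L) : R := \sum_i l ord0 i * p i.
Definition cc (l : L) := Sv (fun i => Y i - Av i) l.
Definition PP (l : L) := Sp (fun i => dot (Av i) (Y i)) l.
Definition gg (l : L) := - (dot (cc l) (cc l)) / 4%:R - PP l.
Definition simplex := [set l : L | (forall i, 0 <= l ord0 i) /\ \sum_i l ord0 i = 1].

Lemma Sv_comb w (t : R) (l m : L) : Sv w ((1 - t) *: l + t *: m) = (1 - t) *: Sv w l + t *: Sv w m.
Proof.
rewrite /Sv !scaler_sumr -big_split; apply: eq_bigr => i _.
by rewrite !mxE [in LHS]scalerDl !scalerA.
Qed.

Lemma Sp_comb p (t : R) (l m : L) : Sp p ((1 - t) *: l + t *: m) = (1 - t) * Sp p l + t * Sp p m.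
Proof.
rewrite /Sp !mulr_sumr -big_split; apply: eq_bigr => i _.
by rewrite !mxE mulrDl !mulrA.
Qed.

Definition ej (j : 'I_k) : L := \row_i (i == j)%:R.

Lemma Sv_ej w j : Sv w (ej j) = w j.
Proof.
rewrite /Sv (bigD1 j) //= big1 ?addr0; first by rewrite mxE eqxx scale1r.
by move=> i /negPf hi; rewrite mxE hi scale0r.
Qed.

Lemma Sp_ej p j : Sp p (ej j) = p j.
Proof.
rewrite /Sp (bigD1 j) //= big1 ?addr0; first by rewrite mxE eqxx mul1r.
by move=> i /negPf hi; rewrite mxE hi mul0r.
Qed.

Lemma dot_Sv w1 w2 (l : L) :
  dot (Sv w1 l) (Sv w2 l) = \sum_i \sum_j l ord0 i * l ord0 j * dot (w1 i) (w2 j).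
Proof.
rewrite /Sv dot_suml; apply: eq_bigr => i _; rewrite dotZl dot_sumr mulr_sumr.
by apply: eq_bigr => j _; rewrite dotZr mulrA [_ * l ord0 j]mulrC -mulrA.
Qed.

Lemma gg_le0 (l : L) : simplex l -> (forall i j, 0 <= dot (Av i - Av j) (Y i - Y j)) ->
  gg l <= 0.
Proof.
move=> [l0 l1] mono.
set a := Sv Av l; set y := Sv Y l.
have hS : \sum_i \sum_j l ord0 i * l ord0 j * dot (Av i - Av j) (Y i - Y j)
   = 2%:R * PP l - 2%:R * dot a y.
  have e1 : forall i j, l ord0 i * l ord0 j * dot (Av i - Av j) (Y i - Y j) =
     ((l ord0 i * l ord0 j * dot (Av i) (Y i) - l ord0 i * l ord0 j * dot (Av i) (Y j))
      - l ord0 i * l ord0 j * dot (Av j) (Y i)) + l ord0 i * l ord0 j * dot (Av j) (Y j).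
    by move=> i j; rewrite !dotBl !dotBr; ring.
  under eq_bigr => i _ do under eq_bigr => j _ do rewrite e1.
  under eq_bigr => i _ do rewrite big_split /= !sumrB.
  rewrite big_split /= !sumrB.
  have t1 : \sum_i \sum_j l ord0 i * l ord0 j * dot (Av i) (Y i) = PP l.
    rewrite /PP /Sp; apply: eq_bigr => i _.
    by rewrite -mulr_suml -mulr_sumr l1 mulr1.
  have t4 : \sum_i \sum_j l ord0 i * l ord0 j * dot (Av j) (Y j) = PP l.
    rewrite exchange_big /=; rewrite /PP /Sp; apply: eq_bigr => j _.
    by rewrite -mulr_suml -mulr_suml l1 mul1r.
  have t2 : \sum_i \sum_j l ord0 i * l ord0 j * dot (Av i) (Y j) = dot a y.
    by rewrite dot_Sv.
  have t3 : \sum_i \sum_j l ord0 i * l ord0 j * dot (Av j) (Y i) = dot a y.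
    rewrite dot_Sv exchange_big /=; apply: eq_bigr => i _; apply: eq_bigr => j _.
    by rewrite [l ord0 i * _]mulrC.
  rewrite t1 t2 t3 t4; ring.
have hpos : 0 <= \sum_i \sum_j l ord0 i * l ord0 j * dot (Av i - Av j) (Y i - Y j).
  apply: sumr_ge0 => i _; apply: sumr_ge0 => j _.
  by apply: mulr_ge0; [apply: mulr_ge0 | apply: mono].
rewrite hS in hpos.
rewrite /gg /cc.
have -> : Sv (fun i => Y i - Av i) l = y - a.
  by rewrite /y /a /Sv -sumrB; apply: eq_bigr => i _; rewrite scalerBr.
rewrite !dotBl !dotBr (dotC y a).
have := dot_ge0 (y + a); rewrite !dotDl !dotDr (dotC y a).
lra.
Qed.


Lemma simplex_sum (l : L) : \sum_i l ord0 i = Sp (fun=> 1) l.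
Proof. by rewrite /Sp; apply: eq_bigr => i _; rewrite mulr1. Qed.

Lemma simplex_comb (t : R) (l m : L) : 0 <= t <= 1 -> simplex l -> simplex m ->
  simplex ((1 - t) *: l + t *: m).
Proof.
move=> /andP[t0 t1] [l0 l1] [m0 m1]; split.
  move=> i; rewrite !mxE; apply: addr_ge0; apply: mulr_ge0 => //; lra.
rewrite simplex_sum Sp_comb -!simplex_sum l1 m1; ring.
Qed.

Lemma simplex_ej j : simplex (ej j).
Proof.
split; first by move=> i; rewrite mxE; case: (i == j).
by rewrite simplex_sum Sp_ej.
Qed.

Lemma simplex_closed : closed simplex.
Proof.
have -> : simplex = (\bigcap_(i in setT) [set l : L | 0 <= l ord0 i]) `&`
    ([set l : L | 0 <= \sum_i l ord0 i - 1] `&` [set l : L | 0 <= 1 - \sum_i l ord0 i]).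
  apply/seteqP; split.
    move=> l [l0 l1]; split; first by move=> i _; exact: l0.
    by rewrite /= l1 subrr.
  move=> l [/= l0 [/= h1 h2]]; split; first by move=> i; exact: l0.
  lra.
have cs : continuous (fun l : L => \sum_i l ord0 i).
  apply: sum_continuous => i; exact: (@coord_continuous R 1 k ord0 i).
apply: closedI; first apply: closed_bigI => i _.
  apply: closed_ge0; exact: (@coord_continuous R 1 k ord0 i).
apply: closedI; apply: closed_ge0 => x.
  have h2 : {for x, continuous (fun _ : L => (1 : R))} by exact: cst_continuous.
  have := continuousB (cs x) h2; by [].
have h2 : {for x, continuous (fun _ : L => (1 : R))} by exact: cst_continuous.
have := continuousB h2 (cs x); by [].
Qed.

Lemma simplex_bounded : bounded_set simplex.
Proof.
apply: (@bounded_enorm R k _ 1) => l [l0 l1].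
apply: le_enorm => //; rewrite expr1n -l1 /dot.
apply: ler_sum => i _; rewrite -expr2 -[X in _ <= X]mulr1 expr2 ler_wpM2l //.
by rewrite -l1 (bigD1 i) //= lerDl sumr_ge0.
Qed.

Lemma gg_continuous : continuous gg.
Proof.
have ccc : continuous cc.
  apply: sum_continuousW => i x.
  exact: (@continuousZr_tmp R _ _ (fun l : L => l ord0 i) (Y i - Av i) x
           (@coord_continuous R 1 k ord0 i x)).
have cP : continuous PP.
  apply: sum_continuous => i x.
  have h2 : {for x, continuous (fun _ : L => dot (Av i) (Y i))} by exact: cst_continuous.
  exact: (continuousM (@coord_continuous R 1 k ord0 i x) h2).
have cd : continuous (fun l => dot (cc l) (cc l)) by apply: dot_continuous.
move=> x.
have h4 : {for x, continuous (fun _ : L => (4%:R)^-1 : R)} by exact: cst_continuous.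
have h5 := continuousM (continuousN (cd x)) h4.
have := continuousB h5 (cP x); by [].
Qed.

Lemma finite_DF : (forall i j, 0 <= dot (Av i - Av j) (Y i - Y j)) ->
  exists x : V, forall j, dot (x + Av j) (x - Y j) <= 0.
Proof.
move=> mono.
have [k0|kpos] := posnP k.
  by exists 0 => j; exfalso; case: j => j; rewrite k0.
have ne : simplex !=set0 by exists (ej (Ordinal kpos)); exact: simplex_ej.
have cpt : compact simplex.
  by apply: bounded_closed_compact; [exact: simplex_bounded | exact: simplex_closed].
have [lb lbS lbmax] := EVT_max_rV ne cpt (continuous_subspaceT gg_continuous).
rewrite in_setE in lbS.
have lbmax' : forall m, simplex m -> gg m <= gg lb by move=> m hm; apply: lbmax; rewrite in_setE.
exists ((2%:R)^-1 *: cc lb) => j.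
apply: (@le_trans _ _ (gg lb)); last exact: gg_le0.
set c := cc lb.
set D := dot c c / 2%:R + (dot c (Av j) - dot c (Y j)) / 2%:R - dot (Av j) (Y j) + PP lb.
set N := dot (c - (Y j - Av j)) (c - (Y j - Av j)).
have key : forall t, 0 < t -> t <= 1 -> t * D - t ^+ 2 * N / 4%:R <= 0.
  move=> t t0 t1.
  have ht01 : 0 <= t <= 1 by rewrite t1 ltW.
  have hs := simplex_comb ht01 lbS (simplex_ej j).
  have := lbmax' _ hs.
  rewrite /gg /cc Sv_comb Sv_ej /PP Sp_comb Sp_ej -/(cc lb) -/(PP lb) -/c.
  rewrite /D /N !(dotDl, dotDr, dotZl, dotZr, dotBl, dotBr, dotNl, dotNr) ?(dotC (Y j) c) ?(dotC (Av j) c)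
     ?(dotC (Y j) (Av j)).
  move=> h; rewrite -subr_le0 in h.
  set z := _ - _ in h; set z' := _ - _.
  suff -> : z' = z by [].
  by rewrite /z /z'; field.
have D0 : D <= 0.
  apply: (scal _ key); exact: dot_ge0.
move: D0; rewrite /D !(dotDl, dotDr, dotZl, dotZr, dotBl, dotBr, dotNl, dotNr) ?(dotC (Av j) c)
   ?(dotC (Y j) c) /gg -/c.
move=> h; lra.
Qed.

End Finite.

Section Minty.
Variables (R : realType) (n : nat).
Local Notation V := 'rV[R]_n.

Lemma maxmono_ne (M : setop R n) : maximally_monotone M -> exists y v, M y v.
Proof.
move=> [_ mx]; apply: contrapT => hne.
have h : forall x u, ~ M x u by move=> x u hM; apply: hne; exists x, u.
pose M' : setop R n := fun x u => x = 0 /\ u = 0.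
have mM' : monotone M' by move=> x y u v [-> ->] [-> ->]; rewrite subrr dot0l.
have := mx M' mM' (fun x u hM => False_ind _ (h x u hM)) 0 0 (conj erefl erefl).
exact: h.
Qed.

Lemma closed_C (z y v : V) (c : R) :
  closed [set x : V | 0 <= dot (z - c *: x - v) (x - y)].
Proof.
have -> : [set x : V | 0 <= dot (z - c *: x - v) (x - y)] =
          [set x : V | 0 <= dot ((z - v) + (- c) *: x) ((- y) + 1 *: x)].
  apply: funext => x /=; congr (_ <= dot _ _); first by rewrite scaleNr addrAC.
  by rewrite scale1r addrC.
apply: (@closed_ge0 R n (fun x => dot ((z - v) + (- c) *: x) ((- y) + 1 *: x))).
apply: dot_continuous; apply: affine_cont; exact: id_cont.
Qed.

Lemma C_bounded (z y v : V) (c : R) : 0 < c ->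
  bounded_set [set x : V | 0 <= dot (z - c *: x - v) (x - y)].
Proof.
move=> c0.
set a := enorm (z - v + c *: y).
set b := `|dot (z - v) y|.
apply: (@bounded_enorm R n _ (1 + (a + b) / c)) => x /= hx.
have e : dot (z - c *: x - v) (x - y) =
   dot x (z - v + c *: y) - dot (z - v) y - c * dot x x.
  rewrite !(dotDl, dotDr, dotZl, dotZr, dotBl, dotBr, dotNl, dotNr).
  rewrite ?(dotC x z) ?(dotC x v) ?(dotC y x) ?(dotC x y); ring.
rewrite e in hx.
have h1 := CS x (z - v + c *: y).
have h2 : - b <= dot (z - v) y by have := lexx b; rewrite {1}/b ler_norml => /andP[].
have a0 : 0 <= a by exact: enorm_ge0.
have b0 : 0 <= b by exact: normr_ge0.
rewrite -/a -enorm_sq in hx h1.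
set r := enorm x in hx h1 *.
have r0 : 0 <= r by exact: enorm_ge0.
have hr : c * r ^+ 2 <= a * r + b by lra.
rewrite -subr_ge0; apply: contraTT isT; rewrite -ltNge => hlt.
have hr1 : 1 + (a + b) / c < r by rewrite subr_lt0 in hlt.
have hr1' : c + (a + b) < c * r.
  by rewrite -(ltr_pM2l c0) mulrDr mulr1 mulrCA mulfV ?gt_eqF // mulr1 in hr1.
have : c * r ^+ 2 > a * r + b.
  rewrite expr2 mulrA.
  have rge1 : 1 <= r.
    apply: le_trans (ltW hr1); rewrite lerDl divr_ge0 //; [lra | exact: ltW].
  nra.
by rewrite ltNge hr.
Qed.

Lemma minty (M : setop R n) (c : R) (z : V) : maximally_monotone M -> 0 < c ->
  exists p, M p (z - c *: p).
Proof.
move=> mM c0; have [y0 [v0 hM0]] := maxmono_ne mM.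
pose I := (V * V)%type.
pose D : set I := [set iv | M iv.1 iv.2].
pose C (iv : I) := [set x : V | 0 <= dot (z - c *: x - iv.2) (x - iv.1)].
pose K := C (y0, v0).
have cK : compact K.
  apply: bounded_closed_compact; [exact: C_bounded | exact: closed_C].
have hcl : closed_fam_of K D (fun i => K `&` C i).
  by exists C => // i _; exact: closed_C.
have fin : finI D (fun i => K `&` C i).
  move=> D' sD'.
  pose s : seq I := (y0, v0) :: enum_fset D'.
  pose k := size s.
  pose Y (i : 'I_k) := (nth (y0, v0) s i).1.
  pose Av (i : 'I_k) := c^-1 *: ((nth (y0, v0) s i).2 - z).
  have inD : forall i : 'I_k, D (nth (y0, v0) s i).
    move=> i; have : nth (y0, v0) s i \in s by apply: mem_nth.
    rewrite inE => /orP[/eqP -> //|hi].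
    by have := sD' _ hi; rewrite in_setE.
  have mono : forall i j, 0 <= dot (Av i - Av j) (Y i - Y j).
    move=> i j; rewrite /Av -scalerBr dotZl; apply: mulr_ge0.
      by rewrite invr_ge0 ltW.
    rewrite opprB addrA subrK.
    by case: mM => [mo _]; apply: mo; [exact: inD | exact: inD].
  have [x hx] := finite_DF mono.
  have key : forall i : 'I_k, C (nth (y0, v0) s i) x.
    move=> i; have := hx i; rewrite /C /= /Av /Y.
    set y := (nth (y0, v0) s i).1; set v := (nth (y0, v0) s i).2.
    have -> : z - c *: x - v = - c *: (x + c^-1 *: (v - z)).
      rewrite scalerDr scalerA mulNr mulfV ?gt_eqF // scaleN1r opprB scaleNr.
      by rewrite [RHS]addrC addrAC.
    rewrite dotZl => h.
    by rewrite mulNr oppr_ge0 pmulr_rle0.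
  exists x => i /= hi; split.
    by have := key (Ordinal (isT : (0 < k)%N)).
  have hs : i \in s by rewrite inE; apply/orP; right; exact: hi.
  have hidx : (index i s < k)%N by rewrite index_mem.
  by have := key (Ordinal hidx); rewrite /= nth_index.
have cK' := cK; rewrite compact_In0 in cK'.
have [x hx] := cK' _ D _ hcl fin.
pose M' : setop R n := fun p u => M p u \/ (p = x /\ u = z - c *: x).
have hxC : forall y v, M y v -> 0 <= dot (z - c *: x - v) (x - y).
  by move=> y v hyv; have [_ ] := hx (y, v) hyv.
have mM' : monotone M'.
  move=> p q u w [hpu|[-> ->]] [hqw|[-> ->]].
  - by case: mM => [mo _]; apply: mo.
  - rewrite -[u - _]opprB -[p - x]opprB dotNl dotNr opprK.
    exact: hxC.
  - exact: hxC.
  - by rewrite subrr dot0l.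
case: mM => [_ mx]; exists x.
by apply: (mx M' mM') => [p u hpu|]; [left | right].
Qed.

End Minty.

Section Core.
Variables (R : realType) (n : nat).
Local Notation V := 'rV[R]_n.

Lemma coef_ge0 (rho m : R) : 0 < rho <= 1 -> 0 < m <= 1 ->
  0 <= 2%:R * ((1 + rho) * ((1 + rho) / m - rho)) / (m * rho) - rho ^+ 2
       - rho ^+ 3 / (rho + 2%:R) - ((1 + rho) / m - rho) ^+ 2.
Proof.
move=> /andP[r0 r1] /andP[m0 m1].
set t := m^-1.
have t1 : 1 <= t by rewrite /t invf_ge1.
have t0 : 0 < t by lra.
set K := (1 + rho) * t - rho.
have K1 : 1 <= K by rewrite /K; nra.
have K2 : K <= (1 + rho) * t by rewrite /K; lra.
have e2 : 2%:R * ((1 + rho) * K) / (m * rho) = 2%:R * (1 + rho) * K * t / rho.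
  rewrite /t; field; rewrite ?gt_eqF //.
rewrite e2.
have rp : 0 < rho + 2%:R by lra.
have Q : 0 <= 2%:R * (rho + 2%:R) * (1 + rho) * K * t - 2%:R * rho ^+ 3 * (rho + 1)
              - rho * (rho + 2%:R) * K ^+ 2.
  have h1 : rho * (rho + 2%:R) * K ^+ 2 <= rho * (rho + 2%:R) * (1 + rho) * t * K.
    have hK : K * K <= ((1 + rho) * t) * K by apply: ler_wpM2r; lra.
    have hp : 0 <= rho * (rho + 2%:R) by apply: mulr_ge0; lra.
    have := ler_wpM2l hp hK; rewrite expr2.
    by rewrite !mulrA.
  have h2 : 1 <= t * K by rewrite -[1]mulr1; apply: ler_pM => //; lra.
  have h3 : rho ^+ 3 <= rho by rewrite -[X in _ <= X]expr1 ler_wiXn2l //; lra.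
  have h5 : 0 <= (rho + 2%:R) * (2%:R - rho) by apply: mulr_ge0; lra.
  have h6 := ler_wpM2r h5 h2; rewrite mul1r in h6.
  have h7 : rho ^+ 2 <= 1 by rewrite expr2; nra.
  have h4 : 0 <= (1 + rho) * (t * K * (rho + 2%:R) * (2%:R - rho) - 2%:R * rho ^+ 3).
    apply: mulr_ge0; first lra.
    have e : t * K * (rho + 2%:R) * (2%:R - rho) = t * K * ((rho + 2%:R) * (2%:R - rho)) by ring.
    rewrite e; lra.
  nra.
have -> : 2%:R * (1 + rho) * K * t / rho - rho ^+ 2 - rho ^+ 3 / (rho + 2%:R) - K ^+ 2 =
   (2%:R * (rho + 2%:R) * (1 + rho) * K * t - 2%:R * rho ^+ 3 * (rho + 1)
              - rho * (rho + 2%:R) * K ^+ 2) / (rho * (rho + 2%:R)).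
  by field; rewrite ?gt_eqF.
by apply: divr_ge0 => //; apply: mulr_ge0; lra.
Qed.


Lemma core1 (u E v g : V) (rho m : R) : 0 < rho <= 1 -> 0 < m <= 1 ->
  0 <= dot (E - g) u - m * dot u u -> 0 <= dot v u - dot v v ->
  0 <= rho * dot g E - dot g g ->
  dot (u + rho *: (v + g)) (u + rho *: (v + g)) <= ((1 + rho) / m) ^+ 2 * dot E E.
Proof.
move=> hr hm q2 q3 q4.
have cf := coef_ge0 hr hm.
case/andP: hr => r0 r1; case/andP: hm => m0 m1.
set Kp := (1 + rho) / m - rho.
set ka := (1 + rho) * Kp.
set coef := 2%:R * ka / (m * rho) - rho ^+ 2 - rho ^+ 3 / (rho + 2%:R) - Kp ^+ 2.
set w1 := v - u - (rho / (rho + 2%:R)) *: g.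
set w2 := (1 + rho) *: u - ((1 + rho) / m) *: E + (ka / (1 + rho)) *: g.
have s1 := dot_ge0 w1; have s2 := dot_ge0 w2; have s3 := dot_ge0 g.
have rp : 0 < rho + 2%:R by lra.
have rp1 : 0 < 1 + rho by lra.
have id : ((1 + rho) / m) ^+ 2 * dot E E - dot (u + rho *: (v + g)) (u + rho *: (v + g)) =
   2%:R * (1 + rho) ^+ 2 / m * (dot (E - g) u - m * dot u u)
   + 2%:R * rho * (1 + rho) * (dot v u - dot v v)
   + 2%:R * ka / (m * rho) * (rho * dot g E - dot g g)
   + rho * (rho + 2%:R) * dot w1 w1 + dot w2 w2 + coef * dot g g.
  rewrite /w1 /w2 /coef /ka /Kp.
  rewrite !(dotDl, dotDr, dotZl, dotZr, dotBl, dotBr, dotNl, dotNr).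
  rewrite ?(dotC E u) ?(dotC v u) ?(dotC g u) ?(dotC v E) ?(dotC g E) ?(dotC g v).
  by field; rewrite ?gt_eqF // ?lt0r_neq0.
rewrite -subr_ge0 id.
have h2 : 0 <= 2%:R * (1 + rho) ^+ 2 / m.
  by apply: divr_ge0; [apply: mulr_ge0; [lra | apply: sqr_ge0] | lra].
have h3 : 0 <= 2%:R * rho * (1 + rho) by apply: mulr_ge0; [apply: mulr_ge0|]; lra.
have hka : 0 <= ka.
  rewrite /ka /Kp; apply: mulr_ge0; first lra.
  have : 1 + rho <= (1 + rho) / m by rewrite ler_pdivlMr //; nra.
  lra.
have h4 : 0 <= 2%:R * ka / (m * rho) by apply: divr_ge0; [apply: mulr_ge0 => //; lra | apply: mulr_ge0; lra].
have h5 : 0 <= rho * (rho + 2%:R) by apply: mulr_ge0; lra.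
have t1 := mulr_ge0 h2 q2; have t2 := mulr_ge0 h3 q3; have t3 := mulr_ge0 h4 q4.
have t4 := mulr_ge0 h5 s1.
have t5 : 0 <= coef * dot g g by apply: mulr_ge0; [exact: cf | exact: s3].
lra.
Qed.


Lemma core (u E v g : V) (beta gam mu : R) : 0 < beta -> 0 < gam <= beta ->
  0 < mu -> mu * beta <= 1 ->
  mu * dot u u <= dot (E - g) u -> beta * dot v v <= dot v u ->
  beta * dot g g <= gam * dot g E ->
  enorm (u + gam *: (v + g)) <= (gam + beta) / (mu * beta) * enorm E.
Proof.
move=> b0 /andP[g0 gb] m0 mb q2 q3 q4.
have hr : 0 < gam / beta <= 1 by rewrite divr_gt0 //= ler_pdivrMr // mul1r.
have hm : 0 < mu * beta <= 1 by rewrite mulr_gt0.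
have h := core1 (u := u) (E := beta *: E) (v := beta *: v) (g := beta *: g) hr hm.
have e : u + gam / beta *: (beta *: v + beta *: g) = u + gam *: (v + g).
  by rewrite -scalerDr scalerA mulfVK // gt_eqF.
rewrite e in h.
apply: le_enorm; first by apply: mulr_ge0; [apply: divr_ge0; [lra | apply: mulr_ge0; lra] | exact: enorm_ge0].
apply: le_trans (h _ _ _) _.
- rewrite -scalerBr !(dotZl, dotZr, dotBl, dotBr); rewrite !(dotZl, dotZr, dotBl, dotBr) in q2.
  have : 0 <= beta * (dot E u - dot g u - mu * dot u u) by apply: mulr_ge0; lra.
  move=> hh; nra.
- rewrite !(dotZl, dotZr).
  have : 0 <= beta * (dot v u - beta * dot v v) by apply: mulr_ge0; lra.
  nra.
- rewrite !(dotZl, dotZr).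
  have : 0 <= beta * (gam * dot g E - beta * dot g g) by apply: mulr_ge0; lra.
  have -> : gam / beta * (beta * (beta * dot g E)) = beta * (gam * dot g E) by field; rewrite gt_eqF.
  nra.
rewrite [X in _ <= X]exprMn enorm_sq dotZl dotZr.
rewrite le_eqVlt; apply/orP; left; apply/eqP; field; rewrite ?gt_eqF // mulf_neq0 // gt_eqF.
Qed.

End Core.

Section Ops.
Variables (R : realType) (n : nat).
Local Notation V := 'rV[R]_n.
Implicit Types (M A B : setop R n).

Lemma res_exists M (g : R) (r : V) : maximally_monotone M -> 0 < g ->
  exists2 u, M (resolvent (scale_op g M) r) u &
             g *: u = r - resolvent (scale_op g M) r.
Proof.
move=> mM g0.
have gi : 0 < g^-1 by rewrite invr_gt0.
have [p hp] := minty (g^-1 *: r) mM gi.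
have hP : exists p, [set p | scale_op g M p (r - p)] p.
  exists p; exists (g^-1 *: r - g^-1 *: p) => //.
  by rewrite -scalerBr scalerA mulfV ?gt_eqF // scale1r.
have := xgetPex 0 hP; rewrite /resolvent.
by case=> u hu e; exists u.
Qed.

Lemma res_unique M (g : R) (r p u : V) : monotone M -> 0 < g ->
  M p u -> g *: u = r - p -> resolvent (scale_op g M) r = p.
Proof.
move=> mo g0 hu e; rewrite /resolvent; apply: xget_unique; first by exists u.
move=> q [u' hu' e'].
have h := mo _ _ _ _ hu' hu.
have e2 : g *: (u' - u) = p - q.
  by rewrite scalerBr e e'; apply/rowP => i; rewrite !mxE; ring.
have : dot (g *: (u' - u)) (q - p) = - dot (q - p) (q - p) by rewrite e2 -dotNl opprB.
rewrite dotZl => h3.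
have h4 : 0 <= - dot (q - p) (q - p) by rewrite -h3 mulr_ge0 // ltW.
have h5 := dot_ge0 (q - p).
have : dot (q - p) (q - p) = 0 by lra.
by move/dot_eq0/eqP; rewrite subr_eq0 => /eqP.
Qed.


Lemma B_total B (beta : R) : maximally_monotone B -> 0 < beta -> cocoercive beta B ->
  forall x, exists v, B x v.
Proof.
move=> [moB mxB] b0 coB x.
pose N : setop R n := fun u w => exists y, B y u /\ w = y - beta *: u.
have moN : monotone N.
  move=> u1 u2 w1 w2 [y1 [h1 ->]] [y2 [h2 ->]].
  have h := coB _ _ _ _ h1 h2; rewrite enorm_sq in h.
  have -> : y1 - beta *: u1 - (y2 - beta *: u2) = (y1 - y2) - beta *: (u1 - u2).
    by apply/rowP => i; rewrite !mxE; ring.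
  rewrite dotBl dotZl (dotC (y1 - y2)); lra.
have mxN : maximally_monotone N.
  split => // N' moN' ext u w hN'.
  pose B' : setop R n := fun y u => N' u (y - beta *: u).
  have moB' : monotone B'.
    move=> y1 y2 u1 u2 h1 h2; have h := moN' _ _ _ _ h1 h2.
    have e : y1 - beta *: u1 - (y2 - beta *: u2) = (y1 - y2) - beta *: (u1 - u2).
      by apply/rowP => i; rewrite !mxE; ring.
    rewrite e dotBl dotZl (dotC (y1 - y2)) in h.
    have := dot_ge0 (u1 - u2).
    have : 0 <= beta * dot (u1 - u2) (u1 - u2) by rewrite mulr_ge0 ?dot_ge0 // ltW.
    lra.
  have extB : forall y u, B y u -> B' y u by move=> y u' h; apply: ext; exists y.
  have := mxB B' moB' extB (w + beta *: u) u.
  rewrite /B' addrK => /(_ hN') hB.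
  by exists (w + beta *: u); split => //; rewrite addrK.
have [p [y [hy e]]] := minty x mxN b0.
exists p; suff -> : x = y by [].
by move/(congr1 (fun t => t + beta *: p)): e; rewrite !subrK.
Qed.

Lemma fiber_closed M (u : V) : maximally_monotone M -> closed [set x | M x u].
Proof.
move=> [mo mx].
have -> : [set x | M x u] =
  \bigcap_(i in [set iv : V * V | M iv.1 iv.2]) [set x | 0 <= dot (u - i.2) (x - i.1)].
  apply/seteqP; split.
    by move=> x hx [y v] /= hyv; exact: mo.
  move=> x hx.
  pose M' : setop R n := fun p w => M p w \/ (p = x /\ w = u).
  have mM' : monotone M'.
    move=> p q w1 w2 [h1|[-> ->]] [h2|[-> ->]].
    - exact: mo.
    - rewrite -[w1 - _]opprB -[p - x]opprB dotNl dotNr opprK.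
      exact: (hx (p, w1) h1).
    - exact: (hx (q, w2) h2).
    - by rewrite subrr dot0l.
  by apply: (mx M' mM') => [p w h|]; [left | right].
apply: closed_bigI => -[y v] _ /=.
have -> : [set x : V | 0 <= dot (u - v) (x - y)] =
          [set x : V | 0 <= dot ((u - v) + 0 *: x) ((- y) + 1 *: x)].
  by apply: funext => x /=; rewrite scale0r addr0 scale1r (addrC (- y)).
apply: (@closed_ge0 R n (fun x => dot ((u - v) + 0 *: x) ((- y) + 1 *: x))).
by apply: dot_continuous; apply: affine_cont; exact: id_cont.
Qed.

Lemma sol_char A B (beta : R) (x0 a0 b0 : V) : monotone A -> 0 < beta -> cocoercive beta B ->
  A x0 a0 -> B x0 b0 -> a0 + b0 = 0 ->
  solution_set A B = [set x | A x (- b0)] `&` [set x | B x b0].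
Proof.
move=> moA b0p coB hA hB e0.
have ea0 : a0 = - b0 by move/eqP: e0; rewrite addr_eq0 => /eqP.
apply/seteqP; split; last by move=> x [h1 h2]; exists (- b0), b0; rewrite addNr.
move=> x [a1 [b1 [h1 [h2 e1]]]].
have ea1 : a1 = - b1 by move/eqP: e1; rewrite addr_eq0 => /eqP.
have c1 := coB _ _ _ _ h2 hB; rewrite enorm_sq in c1.
have m1 := moA _ _ _ _ h1 hA.
have e : a1 - a0 = - (b1 - b0) by rewrite ea1 ea0; apply/rowP => i; rewrite !mxE; ring.
rewrite e dotNl in m1.
have d0 := dot_ge0 (b1 - b0).
have : beta * dot (b1 - b0) (b1 - b0) <= 0 by lra.
rewrite pmulr_rle0 // => h.
have : dot (b1 - b0) (b1 - b0) = 0 by lra.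
move/dot_eq0/eqP; rewrite subr_eq0 => /eqP eb.
by split; [rewrite /= -eb -ea1 | rewrite /= -eb].
Qed.

Lemma proj_exists (S : set V) (p : V) : closed S -> S !=set0 ->
  exists xs, is_proj S p xs.
Proof.
move=> cS [x0 Sx0].
set r0 := dot (p - x0) (p - x0).
have cf : continuous (fun x : V => dot (p - x) (p - x)).
  have -> : (fun x : V => dot (p - x) (p - x)) =
            (fun x => dot (p + (-1) *: x) (p + (-1) *: x)).
    by apply: funext => x; rewrite scaleN1r.
  by apply: dot_continuous; apply: affine_cont; exact: id_cont.
set T := S `&` [set x | 0 <= r0 - dot (p - x) (p - x)].
have cT : closed T.
  apply: closedI => //.
  apply: (@closed_ge0 R n (fun x => r0 - dot (p - x) (p - x))) => x.
  have h1 : {for x, continuous (fun _ : V => r0)} by exact: cst_continuous.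
  have := continuousB h1 (cf x); by [].
have bT : bounded_set T.
  apply: (@bounded_enorm R n _ (enorm p + enorm (p - x0))) => x [_ /= hx].
  have : enorm (p - x) <= enorm (p - x0).
    apply: le_enorm; first exact: enorm_ge0.
    by rewrite enorm_sq -/r0; lra.
  have := enorm_triangle p (- (p - x)); rewrite enormN opprB addrC subrK.
  lra.
have neT : T !=set0 by exists x0; split => //=; rewrite subrr.
have [xs hxs hmin] := EVT_min_rV neT (bounded_closed_compact bT cT) (continuous_subspaceT cf).
rewrite in_setE in hxs; case: hxs => Sxs /= hxs.
exists xs; split => // q Sq.
rewrite /enorm ler_sqrt ?dot_ge0 //.
have [hq|hq] := leP 0 (r0 - dot (p - q) (p - q)).
  by apply: hmin; rewrite in_setE; split.
lra.
Qed.

Lemma dist_le (S : set V) (w z : V) : S z -> dist S w <= enorm (w - z).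
Proof.
move=> Sz; rewrite /dist.
have hl : has_lbound [set enorm (w - z0) | z0 in S].
  by exists 0 => y [z0 _ <-]; exact: enorm_ge0.
by apply: (ge_inf hl); exists z.
Qed.

Lemma fix_pt A B (gam lam : R) (xs a0 b0 : V) : monotone A -> monotone B ->
  0 < gam -> A xs a0 -> B xs b0 -> a0 + b0 = 0 ->
  DR_op A B gam lam (xs + gam *: b0) = xs + gam *: b0.
Proof.
move=> moA moB g0 hA hB e0.
have ea0 : a0 = - b0 by move/eqP: e0; rewrite addr_eq0 => /eqP.
have r1 : resolvent (scale_op gam B) (xs + gam *: b0) = xs.
  by apply: (res_unique moB g0 hB); rewrite addrC addKr.
have r2 : resolvent (scale_op gam A) (xs - gam *: b0) = xs.
  apply: (res_unique moA g0 hA); rewrite ea0; apply/rowP => i; rewrite !mxE; ring.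
rewrite /DR_op /reflected r1.
have -> : 2%:R *: xs - (xs + gam *: b0) = xs - gam *: b0.
  by apply/rowP => i; rewrite !mxE; ring.
by rewrite r2; apply/rowP => i; rewrite !mxE; field.
Qed.

End Ops.

Unset Implicit Arguments.

Theorem proposition2 (R : realType) (n : nat) (A B : setop R n)
    (beta mu_f lambda gamma : R) (w1 : 'rV[R]_n) :
  maximally_monotone A -> maximally_monotone B ->
  0 < beta -> cocoercive beta B ->
  solution_set A B !=set0 ->
  0 < mu_f -> restricted_strongly_monotone A B mu_f ->
  0 < lambda < 2%:R -> 0 < gamma <= beta ->
  fixed_points (DR_op A B gamma lambda) !=set0 ->
  error_bound (DR_op A B gamma lambda)
    [set w | dist (fixed_points (DR_op A B gamma lambda)) w
             <= dist (fixed_points (DR_op A B gamma lambda)) w1]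
    ((gamma + gamma * Num.min (mu_f * beta) 1 + beta)
       / (lambda * gamma * Num.min (mu_f * beta) 1)).
Proof.
move=> mA mB b0 coB [x0 Sx0] muf0 rsm /andP[l0 l2] /andP[g0 gb] _ w _.
have moA := mA.1; have moB := mB.1.
have [a0 [b0' [hA0 [hB0 e0]]]] := Sx0.
have clX : closed (solution_set A B : set 'rV[R]_n).
  rewrite (sol_char moA b0 coB hA0 hB0 e0).
  by apply: closedI; [exact: fiber_closed | exact: fiber_closed].
have [b hb eb] := res_exists w mB g0.
set xB := resolvent (scale_op gamma B) w in hb eb.
set r := reflected (scale_op gamma B) w.
have [a ha ea] := res_exists r mA g0.
set xA := resolvent (scale_op gamma A) r in ha ea.
have [b' hb'] := B_total mB b0 coB xA.
have [xs [Sxs pxs]] := proj_exists xA clX (ex_intro _ x0 Sx0).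
have [a1 [b1 [hA1 [hB1 e1]]]] := Sxs.
set ws := xs + gamma *: b1.
have fws : fixed_points (DR_op A B gamma lambda) ws by exact: (fix_pt lambda moA moB g0 hA1 hB1 e1).
have hd := dist_le w fws.
set m := Num.min (mu_f * beta) 1.
have m0 : 0 < m by rewrite lt_min ltr01 andbT mulr_gt0.
have m1 : m <= 1 by rewrite ge_min lexx orbT.
have m2 : m <= mu_f * beta by rewrite ge_min lexx.
set mu := m / beta.
have mub : mu * beta = m by rewrite /mu mulfVK // gt_eqF.
have mu0 : 0 < mu by rewrite divr_gt0.
have muf : mu <= mu_f by rewrite /mu ler_pdivrMr.
have er : r = 2%:R *: xB - w by [].
have eBA : xB - xA = gamma *: (a + b).
  rewrite scalerDr ea eb er; apply/rowP => i; rewrite !mxE; ring.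
set u := xA - xs; set E := a + b; set v := b' - b1; set g := b - b'.
have q2 : mu * dot u u <= dot (E - g) u.
  have -> : E - g = a + b' by rewrite /E /g; apply/rowP => i; rewrite !mxE; ring.
  have h := rsm _ _ _ _ (conj Sxs pxs) ha hb'; rewrite enorm_sq in h.
  apply: le_trans h; apply: ler_wpM2r => //; exact: dot_ge0.
have q3 : beta * dot v v <= dot v u.
  by have h := coB _ _ _ _ hb' hB1; rewrite enorm_sq in h.
have q4 : beta * dot g g <= gamma * dot g E.
  have h := coB _ _ _ _ hb hb'; rewrite enorm_sq eBA dotZr in h; exact: h.
have hgb : 0 < gamma <= beta by rewrite g0 gb.
have mub1 : mu * beta <= 1 by rewrite mub.
have hc := core b0 hgb mu0 mub1 q2 q3 q4.
have ews : w - ws = (xB - xA) + (u + gamma *: (v + g)).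
  have ew : w = xB + gamma *: b by rewrite eb addrC subrK.
  rewrite /ws /u /v /g ew; apply/rowP => i; rewrite !mxE; ring.
have eT : w - DR_op A B gamma lambda w = lambda *: (xB - xA).
  by rewrite /DR_op -/r /reflected -/xA er; apply/rowP => i; rewrite !mxE; field.
have la := ltW l0; have ga := ltW g0.
rewrite eT enormZ (ger0_norm la) eBA enormZ (ger0_norm ga).
apply: (le_trans hd).
rewrite ews; apply: (le_trans (enorm_triangle _ _)).
rewrite eBA enormZ (ger0_norm ga).
apply: (le_trans (lerD (lexx _) hc)).
rewrite mub -/m.
rewrite -/E le_eqVlt; apply/orP; left; apply/eqP.
by field; rewrite !gt_eqF.
Qed.
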